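(* If $G$ is a $3$-e.c. strongly regular graph with parameters $(v,k,\lambda,\mu)$, then $$\mu(k-\lambda-3)\ \ge\ v-2k+\mu-2.$$
   Context: A strongly regular graph with parameters $(v,k,\lambda,\mu)$ is a $k$-regular graph on $v$ vertices in which every pair of adjacent vertices has exactly $\lambda$ common neighbours and every pair of distinct nonadjacent vertices has exactly $\mu$ common neighbours; it has at least one edge and at least one pair of distinct nonadjacent vertices. A graph with vertex set $V$ is $n$-e.c. if for every pair of disjoint subsets $A,B\subseteq V$ with $|A\cup B|=n$ (either may be empty) there is a vertex $z\notin A\cup B$ adjacent to every vertex of $A$ and to no vertex of $B$. *)

(* Defs.v *)
From mathcomp Require Import all_boot all_order all_algebra.
Set Implicit Arguments. Unset Strict Implicit. Unset Printing Implicit Defensive.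

Definition simple_graph (T : finType) (e : rel T) : Prop :=
  symmetric e /\ irreflexive e.

Definition srg (T : finType) (e : rel T) (v k lam mu : nat) : Prop :=
  simple_graph e /\
  #|T| = v /\
  (forall x : T, #|[set y | e x y]| = k) /\
  (forall x y : T, e x y -> #|[set z | e x z && e y z]| = lam) /\
  (forall x y : T, x != y -> ~~ e x y -> #|[set z | e x z && e y z]| = mu) /\
  (exists x y : T, e x y) /\
  (exists x y : T, (x != y) && ~~ e x y).

Definition n_ec (T : finType) (e : rel T) (n : nat) : Prop :=
  forall A B : {set T}, [disjoint A & B] -> #|A :|: B| = n ->
    exists z : T, [/\ z \notin A :|: B,
                      (forall a, a \in A -> e z a) &
                      (forall b, b \in B -> ~~ e z b)].

(* Main.v *)
Require Import Defs.
From mathcomp Require Import all_boot all_order all_algebra.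
From Stdlib Require Import Lia.

Lemma card3 (T : finType) (a b d : T) : a != b -> a != d -> b != d ->
  #|[set a; b; d]| = 3.
Proof.
move=> ab ad bd; rewrite setUC cardsU1 cards2 ab !inE.
by rewrite negb_or eq_sym ad eq_sym bd.
Qed.

Lemma ec3n (T : finType) (e : rel T) a b d : n_ec e 3 -> a != b -> a != d -> b != d ->
  exists z, [/\ z \notin [set a; b; d], e z a, e z b & ~~ e z d].
Proof.
move=> H ab ad bd.
have hd : [disjoint [set a; b] & [set d]].
  by rewrite disjoint_sym disjoints1 !inE negb_or eq_sym ad eq_sym bd.
have [z [zn za zb]] := H [set a; b] [set d] hd (card3 _ _ _ _ ab ad bd).
exists z; split => //.
- by apply: za; rewrite !inE eqxx.
- by apply: za; rewrite !inE eqxx orbT.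
- by apply: zb; rewrite !inE.
Qed.

Lemma ec3p (T : finType) (e : rel T) a b d : n_ec e 3 -> a != b -> a != d -> b != d ->
  exists z, [/\ z \notin [set a; b; d], e z a, e z b & e z d].
Proof.
move=> H ab ad bd.
have hd0 : [disjoint [set a; b; d] & set0] by rewrite -setI_eq0 setI0.
have hc : #|[set a; b; d] :|: set0| = 3 by rewrite setU0; exact: card3 _ _ _ _ ab ad bd.
have [z [zn za zb]] := H [set a; b; d] set0 hd0 hc.
rewrite setU0 in zn.
exists z; split => //; apply: za; rewrite !inE eqxx ?orbT //.
Qed.

Lemma comb (T : finType) (e : rel T) (v k lam mu : nat) :
  srg e v k lam mu -> n_ec e 3 ->
  exists s, (s + 2 + 2*k = v + mu)%N /\ (s + mu*(lam+3) <= mu*k)%N.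
Proof.
move=> [[sym irr] [Tv [Hk [Hl [Hm [_ [x [y /andP[xy nexy]]]]]]]]] Hec.
have irr' : forall z, e z z = false by move=> z; apply: irr.
set Nx := [set z | e x z]. set Ny := [set z | e y z].
set C := [set z | e x z && e y z].
set S := [set w | [&& w != x, w != y, ~~ e x w & ~~ e y w]].
have hC : #|C| = mu by apply: Hm.
set NS := fun c => [set w | (w \in S) && e c w].
exists #|S|; split.
- have hU : (#|Nx :|: Ny| + mu = 2*k)%N.
    rewrite -hC.
    have -> : C = Nx :&: Ny by apply/setP => z; rewrite !inE.
    by rewrite cardsUI !Hk addnn mul2n.
  have hU2 : #|x |: (y |: (Nx :|: Ny))| = (#|Nx :|: Ny|).+2.
    rewrite !cardsU1 !inE irr' (sym y x) (negbTE nexy) (negbTE xy) !irr'.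
    by rewrite !orbF.
  have hS : S = ~: (x |: (y |: (Nx :|: Ny))).
    apply/setP => w; rewrite !inE !negb_or.
    by rewrite (sym y w) (sym x w) andbA.
  have := cardsC (x |: (y |: (Nx :|: Ny))).
  rewrite -hS hU2 Tv => <-.
  rewrite -hU -!plusE; lia.
- have Hc : forall c, c \in C -> (#|NS c| + (lam + 3) <= k)%N.
    move=> c; rewrite inE => /andP[xc yc].
    have cy : c != y by apply: contraTneq yc => ->; rewrite irr'.
    have cx : c != x by apply: contraTneq xc => ->; rewrite irr'.
    have yx : y != x by rewrite eq_sym.
    have [z' [zn zc zy zx]] := ec3n _ _ _ _ _ Hec cy cx yx.
    move: zn; rewrite !inE !negb_or => /andP[/andP[z'c z'y] z'x].
    set D := [set z | e c z && e x z].
    have hD : #|D| = lam by apply: Hl; rewrite sym.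
    set D3 := x |: (y |: (z' |: D)).
    have hD3 : #|D3| = (lam + 3)%N.
      rewrite !cardsU1 hD !inE (sym x z') (negbTE zx) andbF.
      rewrite (eq_sym y z') (negbTE z'y) (negbTE nexy) andbF.
      rewrite (eq_sym x z') (negbTE z'x) (negbTE xy) irr' andbF /=.
      by rewrite -!plusE; lia.
    have hI : D3 :&: NS c = set0.
      apply/eqP; rewrite -subset0; apply/subsetP => w; rewrite !inE.
      case/andP => H1 /andP[/and4P[wx wy nxw nyw] cw].
      case/orP: H1 => [/eqP wx'|/orP[/eqP wy'|/orP[/eqP wz|/andP[_ hx]]]].
      - by rewrite wx' eqxx in wx.
      - by rewrite wy' eqxx in wy.
      - by rewrite wz sym zy in nyw.
      - by rewrite hx in nxw.
    have hsub : D3 :|: NS c \subset [set z | e c z].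
      apply/subsetP => w; rewrite !inE.
      case/orP => [/orP[/eqP->|/orP[/eqP->|/orP[/eqP->|/andP[-> _]]]]|/andP[_ ->]] //.
      - by rewrite sym.
      - by rewrite sym.
      - by rewrite sym.
    have := subset_leq_card hsub.
    by rewrite Hk -hD3 addnC -cardsUI hI cards0 addn0.
  have hsum : (#|S| <= \sum_(c in C) #|NS c|)%N.
    have hNS : forall c, #|NS c| = (\sum_(w in S) (e c w : nat))%N.
      move=> c; rewrite -sum1_card big_mkcond /= [RHS]big_mkcond /=.
      by apply: eq_bigr => w _; rewrite /NS in_set; case: (w \in S) => //=; case: (e c w).
    rewrite (eq_bigr _ (fun c _ => hNS c)) exchange_big /= -sum1_card.
    apply: leq_sum => w; rewrite inE => /and4P[wx wy nxw nyw].
    have xw : x != w by rewrite eq_sym.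
    have yw : y != w by rewrite eq_sym.
    have [z [zn zx zy zw]] := ec3p _ _ _ _ _ Hec xy xw yw.
    have zC : z \in C by rewrite inE sym zx sym zy.
    rewrite (bigD1 z zC) /= zw.
    exact: leq_addr.
  have hk : (\sum_(c in C) (#|NS c| + (lam + 3)) <= \sum_(c in C) k)%N.
    by apply: leq_sum => c /Hc.
  rewrite big_split /= !sum_nat_const hC in hk.

  apply: leq_trans hk; by rewrite leq_add2r.
Qed.

Import GRing.Theory Num.Theory.
Local Open Scope ring_scope.

Lemma arith (v k lam mu s : nat) : (s + 2 + 2*k = v + mu)%N -> (s + mu*(lam+3) <= mu*k)%N ->
  (mu%:Z * (k%:Z - lam%:Z - 3) >= v%:Z - 2 * k%:Z + mu%:Z - 2)%R.
Proof.
move=> Hv Hs.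
rewrite !mulrBr !lerBrDr.
rewrite (addrAC _ (-2)) (addrAC _ (-2)).
rewrite (addrAC _ (- (2 * k%:Z))) (addrAC _ (- (2 * k%:Z))) (addrAC _ (- (2 * k%:Z))).
rewrite !lerBlDr.
rewrite -!PoszM -!PoszD lez_nat.
move: Hv Hs => /eqP Hv Hs. move/eqP: Hv => Hv. move/leP: Hs => Hs. apply/leP.
rewrite -?plusE -?multE in Hv Hs *. lia.
Qed.

Theorem mainTheorem6 (T : finType) (e : rel T) (v k lam mu : nat) :
  srg e v k lam mu -> n_ec e 3 ->
  (mu%:Z * (k%:Z - lam%:Z - 3) >= v%:Z - 2 * k%:Z + mu%:Z - 2)%R.
Proof.
move=> H1 H2; have [s [Hv Hs]] := comb _ _ _ _ _ _ H1 H2.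
exact: (arith _ _ _ _ _ Hv Hs).
Qed.
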